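(* Let $k\ge1$ and $n\ge1$, and let $a_1,\dots,a_n\in A$ be such that for each $i$ there is an integer $p_i>0$ with $a_i\in A(100^{k^2}p_i-1)$. Suppose $a_i\notin B_1+\dots+B_k$ for every $i$. Then for all non-negative integers $m_1,\dots,m_n$, $$a_1x_{m_1}a_2x_{m_2}\cdots a_nx_{m_n}\notin B_1+\dots+B_k.$$
   Context: Let $K$ be a field and $A$ the free associative (non-unital) $K$-algebra on free generators $x_0,x_1,x_2,\dots$, with $K$-basis of monomials; $A^1$ is $A$ with unity adjoined. For $n\ge1$, $A(n)$ is the $K$-span of monomials of length $n$, and $A(0)=K$. For a monomial $s=x_{i_1}\cdots x_{i_n}$ write $s[q]=x_{i_q}$. For $j\ge1$, $Z_j$ is the set of all elements $a\in A$ of one of the forms: (1) $a=\kappa s$, $\kappa\in K$, $s$ a monomial of length $100^{j^2}-1$ with $s[3^p\cdot100^{(j-1)^2}]=s[3^q\cdot100^{(j-1)^2}]$ for some $0\le p<q\le j$; (2) $a=\kappa(s_1+s_2)$, $\kappa\in K$, $s_1,s_2$ monomials of length $100^{j^2}-1$, with integers $0\le p<q\le j$ and $l_1>l_2\ge0$ such that $s_1$ has $x_{l_1}$ at position $3^p\cdot100^{(j-1)^2}$ and $x_{l_2}$ at position $3^q\cdot100^{(j-1)^2}$, $s_2$ has $x_{l_2}$ and $x_{l_1}$ at these positions respectively, and $s_1,s_2$ agree at all other positions. $B_j=\sum_{m\ge0}A(m\cdot100^{j^2})\,Z_j\,A^1$ (the $K$-span of products $uzv$ with $u\in A(m\cdot100^{j^2})$,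 $m\ge0$, $z\in Z_j$, $v\in A^1$). *)

(* Defs.v *)
(* The free associative algebra K<x_0,x_1,...> with unity
   adjoined (A^1) is modelled by finitely supported coefficient functions
   on words (seq nat, the word [:: i1; ...; in] being x_{i1}...x_{in});
   the empty word is the unit. *)
From HB Require Import structures.
From mathcomp Require Import all_boot all_order all_algebra.
Set Implicit Arguments. Unset Strict Implicit. Unset Printing Implicit Defensive.
Import GRing.Theory.
Local Open Scope ring_scope.

Section FreeAlg.
Variable K : fieldType.

Definition elt := seq nat -> K.

Definition finsupp (f : elt) : Prop :=
  exists L : seq (seq nat), forall w, f w != 0 -> w \in L.

Definition A1 (f : elt) : Prop := finsupp f.
Definition inA (f : elt) : Prop := finsupp f /\ f [::] = 0.

Definition An (n : nat) (f : elt) : Prop :=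
  finsupp f /\ forall w, f w != 0 -> size w = n.

Definition zeroA : elt := fun _ => 0.
Definition addA (f g : elt) : elt := fun w => f w + g w.
Definition scaleA (c : K) (f : elt) : elt := fun w => c * f w.
Definition mulA (f g : elt) : elt :=
  fun w => \sum_(i < (size w).+1) f (take i w) * g (drop i w).
Definition mono (s : seq nat) : elt := fun w => (w == s)%:R.
Definition oneA : elt := mono [::].
Definition gen (i : nat) : elt := mono [:: i].

Inductive span (S : elt -> Prop) : elt -> Prop :=
| span0 : span S zeroA
| span_gen f : S f -> span S f
| span_add f g : span S f -> span S g -> span S (addA f g)
| span_scale c f : span S f -> span S (scaleA c f).

(* s[q], 1-indexed *)
Definition pos (s : seq nat) (q : nat) : nat := nth 0%N s q.-1.

Definition Nj (j : nat) : nat := (100 ^ (j ^ 2)).-1.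
Definition Pj (j p : nat) : nat := (3 ^ p * 100 ^ ((j.-1) ^ 2))%N.

Definition Zj (j : nat) (a : elt) : Prop :=
  (exists (c : K) (s : seq nat),
     a = scaleA c (mono s) /\ size s = Nj j /\
     exists p q, (p < q <= j)%N /\ pos s (Pj j p) = pos s (Pj j q))
  \/
  (exists (c : K) (s1 s2 : seq nat),
     a = scaleA c (addA (mono s1) (mono s2)) /\
     size s1 = Nj j /\ size s2 = Nj j /\
     exists p q l1 l2, (p < q <= j)%N /\ (l2 < l1)%N /\
       pos s1 (Pj j p) = l1 /\ pos s1 (Pj j q) = l2 /\
       pos s2 (Pj j p) = l2 /\ pos s2 (Pj j q) = l1 /\
       forall r, (1 <= r <= Nj j)%N -> r <> Pj j p -> r <> Pj j q ->
         pos s1 r = pos s2 r).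

Definition Bgen (j : nat) (b : elt) : Prop :=
  exists m u z v, An (m * 100 ^ (j ^ 2)) u /\ Zj j z /\ A1 v /\
    b = mulA (mulA u z) v.

Definition Bj (j : nat) : elt -> Prop := span (Bgen j).

Definition Bsum (k : nat) (x : elt) : Prop :=
  exists b : nat -> elt, (forall j, (1 <= j <= k)%N -> Bj j (b j)) /\
    x = \big[addA/zeroA]_(1 <= j < k.+1) b j.

Definition wordprod (n : nat) (a : 'I_n -> elt) (m : 'I_n -> nat) : elt :=
  foldr (fun i acc => mulA (mulA (a i) (gen (m i))) acc) oneA (enum 'I_n).

End FreeAlg.

(* Main.v *)
Require Import Defs.
From HB Require Import structures.
From mathcomp Require Import all_boot all_order all_algebra.
From mathcomp Require Import fingroup perm.
From mathcomp Require Import zify.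
From mathcomp Require Import ring.
From Stdlib Require Import FunctionalExtensionality Classical.
Set Implicit Arguments. Unset Strict Implicit. Unset Printing Implicit Defensive.
Import GRing.Theory.
Notation mulA := (@Defs.mulA _).
Notation addA := (@Defs.addA _).
Notation span := (@Defs.span _).

Lemma fext (K : fieldType) (f g : elt K) : (forall w, f w = g w) -> f = g.
Proof. exact: functional_extensionality. Qed.

Lemma mulA_homl (K : fieldType) d (f h : elt K) (w : seq nat) : An d f ->
  mulA f h w = if d <= size w then (f (take d w) * h (drop d w))%R else 0%R.
Proof.
move=> [_ Hf]; rewrite /mulA.
have Hz i : i <= size w -> i != d -> f (take i w) = 0%R.
  move=> Hi Hid; apply/eqP; apply/negPn/negP => /Hf.
  by rewrite size_takel // => /eqP; rewrite (negbTE Hid).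
case: leqP => Hd.
- have Hd' : d < (size w).+1 by rewrite ltnS.
  rewrite (bigD1 (Ordinal Hd')) //= big1 ?GRing.addr0 // => i Hi.
  have Hi1 : i <= size w by rewrite -ltnS.
  have Hi2 : val i != d by apply: contra Hi => /eqP Hi; apply/eqP/val_inj.
  by rewrite Hz ?GRing.mul0r.
- rewrite big1 // => i _.
  have Hi1 : i <= size w by rewrite -ltnS.
  by rewrite Hz ?GRing.mul0r // neq_ltn (leq_ltn_trans Hi1 Hd).
Qed.
Definition Bk j := 100 ^ (j ^ 2).
Definition spec j r := [exists p : 'I_j.+1, r %% Bk j == Pj j p].
Definition lab k i : nat * nat :=
  if [pick j : 'I_k | spec j.+1 i.+1] is Some j then (j.+1, i.+1 %/ Bk j.+1)
  else (0, i.+1).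

Lemma Bk_gt0 j : 0 < Bk j.
Proof. by rewrite /Bk expn_gt0. Qed.

Lemma Pj_gt0 j p : 0 < Pj j p.
Proof. by rewrite /Pj muln_gt0 !expn_gt0. Qed.

Lemma Pj_lt j p : 1 <= j -> p <= j -> Pj j p < Bk j.
Proof.
move=> Hj Hp; rewrite /Pj /Bk.
have H1 : 3 ^ p < 100 ^ j.
  apply: (leq_ltn_trans (leq_pexp2l _ Hp)) => //.
  by rewrite ltn_exp2r.
have H2 : (j.-1) ^ 2 + j <= j ^ 2.
  case: j Hj {H1 Hp} => // j _ /=. rewrite !expnS !expn0 !muln1. nia.
apply: (@leq_trans (100 ^ j * 100 ^ j.-1 ^ 2)).
  by rewrite ltn_pmul2r ?expn_gt0.
by rewrite -expnD addnC leq_exp2l.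
Qed.

Lemma Pj_inj j p q : Pj j p = Pj j q -> p = q.
Proof.
rewrite /Pj => /eqP; rewrite eqn_pmul2r ?expn_gt0 // eqn_exp2l // => /eqP //.
Qed.

Lemma Bk_dvd j j' : j <= j' -> Bk j %| Bk j'.
Proof. move=> H; apply: dvdn_exp2l; by rewrite leq_exp2r. Qed.

Lemma spec_uniq j j' r : 1 <= j -> 1 <= j' -> spec j r -> spec j' r -> j = j'.
Proof.
wlog: j j' / j' < j.
  move=> W Hj Hj' H H'; case: (ltngtP j' j) => // Hl.
  - exact: W.
  - by apply/esym; apply: W.
move=> Hlt Hj Hj' /existsP [p /eqP Hp] /existsP [q /eqP Hq].
have Hd : Bk j' %| 100 ^ (j.-1 ^ 2).
  apply: dvdn_exp2l; rewrite leq_exp2r //; lia.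
have Hd2 : Bk j' %| Bk j by apply: Bk_dvd; lia.
have : r %% Bk j' = 0.
  rewrite -(modn_dvdm _ Hd2) Hp /Pj; apply/eqP; rewrite -/(dvdn _ _).
  exact: dvdn_mull.
rewrite Hq => H0. by move: (Pj_gt0 j' q); rewrite H0.
Qed.

Lemma lab_gen k j m p : 1 <= j <= k -> p <= j ->
  lab k (m * Bk j + (Pj j p).-1) = (j, m).
Proof.
move=> /andP [Hj Hjk] Hp.
have HP := Pj_gt0 j p. have HPl := Pj_lt Hj Hp.
have Er : (m * Bk j + (Pj j p).-1).+1 = m * Bk j + Pj j p.
  by move: HP; case: (Pj j p) => // n _; rewrite addnS.
have Hs : spec j (m * Bk j + Pj j p).
  have Hp' : p < j.+1 by rewrite ltnS.
  apply/existsP; exists (Ordinal Hp') => /=.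
  by rewrite modnMDl modn_small.
rewrite /lab Er; case: pickP => [j0 Hj0 | Hn].
- have E : j0.+1 = j by apply: (spec_uniq _ Hj Hj0 Hs).
  rewrite E divnMDl ?Bk_gt0 // divn_small //. by rewrite addn0.
- have Hj' : j.-1 < k by rewrite prednK.
  move: (Hn (Ordinal Hj')) => /=. by rewrite prednK // Hs.
Qed.

Lemma lab_inv k a b : lab k a = lab k b -> a != b ->
  exists j m p q, [/\ 1 <= j <= k, (p <= j) && (q <= j), p != q,
    a = m * Bk j + (Pj j p).-1 & b = m * Bk j + (Pj j q).-1].
Proof.
rewrite /lab; case: pickP => [j0 Hj0 | Hn]; case: pickP => [j1 Hj1 | Hn'] //.
- case=> E1 E2 Hab. have E : j0 = j1 by apply: val_inj. subst j1.
  move: Hj0 Hj1 => /existsP [p /eqP Hp] /existsP [q /eqP Hq].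
  exists j0.+1, (a.+1 %/ Bk j0.+1), p, q.
  have HP := Pj_gt0 j0.+1 p. have HQ := Pj_gt0 j0.+1 q.
  have Ea := divn_eq a.+1 (Bk j0.+1). have Eb := divn_eq b.+1 (Bk j0.+1).
  split => //.
  + by rewrite ltn_ord andbT.
  + by apply/andP; split; rewrite -ltnS ltn_ord.
  + apply: contra Hab => /eqP Hpq. have {}Hpq : p = q by apply: val_inj. subst q.
    apply/eqP; apply: succn_inj; rewrite Ea Eb Hp Hq E2 //.
  + rewrite Hp in Ea; move: Ea HP; set X := _ * _; set Y := Pj _ _.
    case: Y => [|Y] E H //; apply: succn_inj; by rewrite E addnS.
  + rewrite Hq -E2 in Eb; move: Eb HQ; set X := _ * _; set Y := Pj _ _.
    case: Y => [|Y] E H //; apply: succn_inj; by rewrite E addnS.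
- by move=> [->]; rewrite eqxx.
Qed.

Lemma Nj_Bk j : Nj j = (Bk j).-1.
Proof. by []. Qed.

Lemma align k l c j : 1 <= j <= k -> l.+1 = c * Bk k -> exists c', l.+1 = c' * Bk j.
Proof.
move=> /andP [_ Hjk] E.
have /dvdnP [t Ht] : Bk j %| Bk k by apply: Bk_dvd.
by exists (c * t); rewrite E Ht mulnA.
Qed.

Lemma block_fit k l c j m : 1 <= j <= k -> l.+1 = c * Bk k ->
  m * Bk j <= l -> m * Bk j + Nj j <= l.
Proof.
move=> Hj E Hm; have [c' E'] := align Hj E.
have HB := Bk_gt0 j.
have Hmc : m < c' by rewrite -(ltn_pmul2r HB) -E' ltnS.
have : m.+1 * Bk j <= c' * Bk j by rewrite leq_pmul2r.
rewrite -E' mulSn Nj_Bk. move: HB; case: (Bk j) => // B _ /=.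
by rewrite addSn ltnS addnC.
Qed.

Lemma dichot k l c j m : 1 <= j <= k -> l.+1 = c * Bk k ->
  m * Bk j + Nj j <= l \/ exists m', m * Bk j = l.+1 + m' * Bk j.
Proof.
move=> Hj E; case: (leqP (m * Bk j) l) => Hm.
- by left; apply: (block_fit Hj E).
- right; have [c' E'] := align Hj E.
  have HB := Bk_gt0 j.
  have Hc : c' <= m by rewrite -(leq_pmul2r HB) -E'.
  exists (m - c'); by rewrite E' -mulnDl subnKC.
Qed.

Local Open Scope ring_scope.

Definition act L (w : seq nat) (s : 'S_L) : seq nat :=
  [seq nth 0 w (s i) | i <- enum 'I_L].

Lemma size_act L w (s : 'S_L) : size (act w s) = L.
Proof. by rewrite size_map size_enum_ord. Qed.

Lemma nth_act L w (s : 'S_L) (i : 'I_L) : nth 0 (act w s) i = nth 0 w (s i).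
Proof. by rewrite /act (nth_map i) ?size_enum_ord ?ltn_ord // nth_ord_enum. Qed.

Lemma act_comp L w (s t : 'S_L) : act (act w s) t = act w (t * s)%g.
Proof.
apply: (eq_from_nth (x0:=0)); rewrite !size_act // => i Hi.
pose o := Ordinal Hi; rewrite -[i]/(nat_of_ord o) !nth_act permM //.
Qed.

Lemma act1 L w : size w = L -> act w (1%g : 'S_L) = w.
Proof.
move=> Hs; apply: (eq_from_nth (x0:=0)); rewrite !size_act // => i Hi.
pose o := Ordinal Hi; rewrite -[i]/(nat_of_ord o) !nth_act perm1 //.
Qed.

Definition inH k L (s : 'S_L) := [forall i, lab k (s i) == lab k i].

Lemma inHP k L (s : 'S_L) : inH k s <-> forall i, lab k (s i) = lab k i.
Proof.
split; first by move=> /forallP H i; apply/eqP.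
by move=> H; apply/forallP => i; apply/eqP.
Qed.

Lemma inH1 k L : inH k (1%g : 'S_L).
Proof. by apply/inHP => i; rewrite perm1. Qed.

Lemma inH_mul k L (s t : 'S_L) : inH k s -> inH k t -> inH k (s * t)%g.
Proof. by move=> /inHP Hs /inHP Ht; apply/inHP => i; rewrite permM Ht Hs. Qed.

Lemma inH_inv k L (s : 'S_L) : inH k s -> inH k (s^-1)%g.
Proof.
move=> /inHP Hs; apply/inHP => i.
by rewrite -{2}(permKV s i) Hs.
Qed.

Lemma inH_tperm k L (a b : 'I_L) : lab k a = lab k b -> inH k (tperm a b).
Proof. by move=> E; apply/inHP => i; case: tpermP => [->|->|] //; rewrite E. Qed.

Definition sgn (K : fieldType) L (s : 'S_L) : K := (-1) ^+ odd_perm s.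

Lemma sgn_tperm_mul (K : fieldType) L (a b : 'I_L) (s : 'S_L) : a != b ->
  sgn K (tperm a b * s)%g = - sgn K s.
Proof.
move=> Hab; rewrite /sgn odd_permM odd_tperm Hab.
by case: (odd_perm s); rewrite /= ?expr1 ?expr0 ?opprK.
Qed.

Lemma sum_vanish (K : fieldType) k L (s0 : seq nat) (a b : 'I_L) (F : seq nat -> K) :
  a != b -> lab k a = lab k b ->
  (forall t, size t = L -> F (act t (tperm a b)) = F t) ->
  \sum_(s : 'S_L | inH k s) sgn K s * F (act s0 s) = 0.
Proof.
move=> Hab El HF.
have Ht := inH_tperm El.
rewrite (bigID (fun s : 'S_L => odd_perm s)) /=.
set S1 := (X in X + _).
rewrite (reindex_inj (mulgI (tperm a b))) /=.
have -> : \sum_(s : 'S_L | inH k (tperm a b * s)%g && ~~ odd_perm (tperm a b * s)%g)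
     sgn K (tperm a b * s)%g * F (act s0 (tperm a b * s)%g) =
   \sum_(s : 'S_L | inH k s && odd_perm s) - (sgn K s * F (act s0 s)).
  apply: eq_big => s.
  - rewrite odd_permM odd_tperm Hab /= negbK.
    have -> : inH k (tperm a b * s)%g = inH k s; last by [].
    apply/idP/idP => H; last exact: inH_mul Ht H.
    by have := inH_mul Ht H; rewrite mulgA tperm2 mul1g.
  - move=> _; rewrite sgn_tperm_mul // -act_comp HF ?size_act //.
    by rewrite mulNr.
by rewrite sumrN /S1 subrr.
Qed.

Lemma An_mulA (K : fieldType) d e (f h : elt K) :
  An d f -> An e h -> An (d + e) (mulA f h).
Proof.
move=> Hf Hh; have [[Lf Sf] Zf] := Hf; have [[Lh Sh] Zh] := Hh.
have key w : mulA f h w != 0 ->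
    [/\ (d <= size w)%N, f (take d w) != 0 & h (drop d w) != 0].
  rewrite (mulA_homl _ _ Hf); case: ifP; first by rewrite mulf_eq0 negb_or => ? /andP[].
  by rewrite eqxx.
split.
- exists [seq x ++ y | x <- Lf, y <- Lh] => w /key [_ H1 H2].
  rewrite -(cat_take_drop d w); apply: allpairs_f; [exact: Sf | exact: Sh].
- move=> w /key [H0 H1 H2]; rewrite -(cat_take_drop d w) size_cat.
  by rewrite (Zf _ H1) (Zh _ H2).
Qed.

Lemma An_mono (K : fieldType) (s : seq nat) : An (size s) (mono K s).
Proof.
split; first by exists [:: s] => w; rewrite /mono; case: (w =P s) => [->|]; rewrite ?inE ?eqxx.
by move=> w; rewrite /mono; case: (w =P s) => [->|] //; rewrite eqxx.
Qed.

Lemma A1_mono (K : fieldType) (s : seq nat) : A1 (mono K s).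
Proof. by case: (An_mono K s). Qed.

Lemma An_scale (K : fieldType) d c (f : elt K) : An d f -> An d (scaleA c f).
Proof.
move=> [[L S] Z]; split.
- by exists L => w; rewrite /scaleA mulf_eq0 negb_or => /andP [_ /S].
- by move=> w; rewrite /scaleA mulf_eq0 negb_or => /andP [_ /Z].
Qed.

Lemma An_add (K : fieldType) d (f g : elt K) : An d f -> An d g -> An d (addA f g).
Proof.
move=> [[L S] Z] [[L' S'] Z']; split.
- exists (L ++ L') => w; rewrite /addA mem_cat.
  case: (f w =P 0) => [->|/eqP /S -> //]; rewrite add0r => /S' ->; by rewrite orbT.
- move=> w; rewrite /addA. case: (f w =P 0) => [->|/eqP /Z -> //]; rewrite add0r; exact: Z'.
Qed.

Lemma Zj_An (K : fieldType) j (z : elt K) : Zj j z -> An (Nj j) z.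
Proof.
case=> [[c [s [-> [Hs _]]]] | [c [s1 [s2 [-> [H1 [H2 _]]]]]]].
- by apply: An_scale; rewrite -Hs; apply: An_mono.
- apply: An_scale; apply: An_add; [rewrite -H1 | rewrite -H2]; apply: An_mono.
Qed.

Lemma gen_val (K : fieldType) d N (u z v : elt K) (T : seq nat) :
  An d u -> An N z ->
  mulA (mulA u z) v T = if (d + N <= size T)%N then
     u (take d T) * z (take N (drop d T)) * v (drop (d + N) T) else 0.
Proof.
move=> Hu Hz; rewrite (mulA_homl _ _ (An_mulA Hu Hz)); case: ifP => // H.
rewrite (mulA_homl _ _ Hu) size_takel // leq_addr take_takel ?leq_addr //.
by rewrite take_drop addnC.
Qed.

Lemma eval_big (K : fieldType) (I : Type) (r : seq I) (P : pred I) (F : I -> elt K) w :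
  (\big[addA/zeroA K]_(i <- r | P i) F i) w = \sum_(i <- r | P i) F i w.
Proof.
apply: (big_rec2 (fun (f : elt K) x => f w = x)) => // i f x _ <-. by [].
Qed.

Lemma Bsum_ext (K : fieldType) k (f g : elt K) :
  (forall w, f w = g w) -> Bsum k f -> Bsum k g.
Proof. by move=> /fext ->. Qed.

Lemma Bsum0 (K : fieldType) k : Bsum k (zeroA K).
Proof.
exists (fun _ => zeroA K); split; first by move=> j _; apply: span0.
apply: fext => w; rewrite eval_big big1 //.
Qed.

Lemma Bsum_add (K : fieldType) k (f g : elt K) :
  Bsum k f -> Bsum k g -> Bsum k (addA f g).
Proof.
move=> [b [Hb ->]] [b' [Hb' ->]].
exists (fun j => addA (b j) (b' j)); split; first by move=> j Hj; apply: span_add; [exact: Hb | exact: Hb'].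
apply: fext => w; rewrite /addA !eval_big -big_split //.
Qed.

Lemma Bsum_scale (K : fieldType) k c (f : elt K) : Bsum k f -> Bsum k (scaleA c f).
Proof.
move=> [b [Hb ->]].
exists (fun j => scaleA c (b j)); split; first by move=> j Hj; apply: span_scale; exact: Hb.
apply: fext => w; rewrite /scaleA !eval_big mulr_sumr //.
Qed.

Lemma Bsum_Bj (K : fieldType) k j (f : elt K) : (1 <= j <= k)%N -> Bj j f -> Bsum k f.
Proof.
move=> Hj Hf.
exists (fun j' => if j' == j then f else zeroA K); split.
  by move=> j' _; case: eqP => [->|_] //; apply: span0.
apply: fext => w; rewrite eval_big (bigD1_seq j) ?iota_uniq ?mem_index_iota //=.
rewrite eqxx big1 ?addr0 // => i /negbTE ->. by [].
Qed.

Lemma Bsum_sum (K : fieldType) k (I : Type) (r : seq I) (P : pred I) (F : I -> elt K) :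
  (forall i, P i -> Bsum k (F i)) -> Bsum k (fun w => \sum_(i <- r | P i) F i w).
Proof.
move=> H; apply: (@Bsum_ext _ _ (\big[addA/zeroA K]_(i <- r | P i) F i)).
  by move=> w; rewrite eval_big.
apply: (big_ind (Bsum k)) => //; [exact: Bsum0 | move=> x y; exact: Bsum_add].
Qed.

Lemma Bsum_nil (K : fieldType) k (f : elt K) : Bsum k f -> f [::] = 0.
Proof.
move=> [b [Hb ->]]; rewrite eval_big big_seq_cond big1 // => j /andP [Hj _].
rewrite mem_index_iota ltnS in Hj.
have : Bj j (b j) by apply: Hb.
elim => //= [g [m [u [z [v [Hu [Hz [_ ->]]]]]]] | f1 g1 _ E1 _ E2 | c f1 _ E1].
- rewrite (gen_val _ _ Hu (Zj_An Hz)) /=; case: ifP => // H.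
  exfalso; move: H; rewrite Nj_Bk /Bk.
  have : (1 < 100 ^ j ^ 2)%N.
    rewrite -{1}(expn0 100) ltn_exp2l // expn_gt0; by case/andP: Hj => ->.
  case: (100 ^ j ^ 2)%N => // n; case: n => // n _. by rewrite addnS.
- by rewrite /Defs.addA E1 E2 addr0.
- by rewrite /scaleA E1 mulr0.
Qed.

Lemma eq_cat3 (u s r T : seq nat) d N : size u = d -> size s = N ->
  (T == u ++ s ++ r) = [&& take d T == u, take N (drop d T) == s & drop (d + N)%N T == r].
Proof.
move=> Hu Hs; apply/eqP/and3P => [-> | [/eqP H1 /eqP H2 /eqP H3]].
- rewrite take_size_cat // drop_size_cat // take_size_cat //.
  by rewrite addnC -drop_drop drop_size_cat // drop_size_cat.
- rewrite -(cat_take_drop d T) H1 -(cat_take_drop N (drop d T)) H2 drop_drop addnC H3 //.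
Qed.

Lemma gen1 (K : fieldType) (u s r : seq nat) :
  mulA (mulA (mono K u) (scaleA 1 (mono K s))) (mono K r) = mono K (u ++ s ++ r).
Proof.
apply: fext => T.
rewrite (gen_val _ _ (An_mono K u) (An_scale 1 (An_mono K s))); case: ifP => H.
- rewrite /mono /scaleA (eq_cat3 _ _ (erefl (size u)) (erefl (size s))).
  by case: eqP; case: eqP; case: eqP; rewrite /= ?mul1r ?mulr1 ?mul0r ?mulr0.
- rewrite /mono; case: eqP => // E; move: H; rewrite E !size_cat addnA leq_addr //.
Qed.

Lemma gen2 (K : fieldType) (u s1 s2 r : seq nat) : size s1 = size s2 ->
  mulA (mulA (mono K u) (scaleA 1 (addA (mono K s1) (mono K s2)))) (mono K r) =
  addA (mono K (u ++ s1 ++ r)) (mono K (u ++ s2 ++ r)).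
Proof.
move=> Hs; apply: fext => T.
have Hz : An (size s1) (scaleA 1 (addA (mono K s1) (mono K s2))).
  apply: An_scale; apply: An_add; first exact: An_mono. rewrite Hs; exact: An_mono.
rewrite (gen_val _ _ (An_mono K u) Hz); case: ifP => H.
- rewrite /mono /scaleA /addA (eq_cat3 _ _ (erefl (size u)) (erefl (size s1))).
  rewrite (eq_cat3 _ _ (erefl (size u)) (esym Hs)).
  by case: eqP; case: eqP; case: eqP; case: eqP; rewrite /= ?mul1r ?mulr1 ?mul0r ?mulr0 ?addr0 ?add0r ?mulrDl ?mulrDr ?mul1r ?mulr1.
- rewrite /mono /addA; case: eqP => [E|_]; first by move: H; rewrite E !size_cat addnA leq_addr.
  case: eqP => [E|_] //; first by move: H; rewrite E !size_cat -Hs addnA leq_addr.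
  by rewrite addr0.
Qed.

Lemma val_tperm L (a b i : 'I_L) :
  val (tperm a b i) = if val i == val a then val b else if val i == val b then val a else val i.
Proof.
case: tpermP => [->|->|Ha Hb]; rewrite ?eqxx //.
- by case: eqP => [->|].
- rewrite !val_eqE; move/eqP/negbTE: Ha => ->; by move/eqP/negbTE: Hb => ->.
Qed.

Lemma nth_act_tperm L w (a b : 'I_L) i : (i < L)%N ->
  nth 0 (act w (tperm a b)) i =
  nth 0 w (if i == val a then val b else if i == val b then val a else i).
Proof.
move=> Hi; pose o := Ordinal Hi; rewrite -[i]/(nat_of_ord o) nth_act val_tperm //.
Qed.

Lemma act_block L N d (t : seq nat) (a b : 'I_L) (a0 b0 : 'I_N) :
  (d + N <= L)%N -> size t = L -> val a = (d + a0)%N -> val b = (d + b0)%N ->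
  [/\ take d (act t (tperm a b)) = take d t,
      drop (d + N)%N (act t (tperm a b)) = drop (d + N)%N t &
      take N (drop d (act t (tperm a b))) = act (take N (drop d t)) (tperm a0 b0)].
Proof.
move=> HL Ht Ha Hb.
have HdL : (d <= L)%N by apply: leq_trans HL; apply: leq_addr.
split.
- apply: (eq_from_nth (x0:=0)); rewrite !size_takel ?size_act ?Ht // => i Hi.
  rewrite !nth_take // nth_act_tperm ?(leq_trans Hi) // Ha Hb.
  rewrite !ifN_eq // neq_ltn (leq_trans Hi) ?orbT // leq_addr //.
- apply: (eq_from_nth (x0:=0)); rewrite !size_drop ?size_act ?Ht // => i Hi.
  rewrite !nth_drop nth_act_tperm; last by rewrite -ltn_subRL.
  have H1 := ltn_ord a0; have H2 := ltn_ord b0.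
  rewrite Ha Hb !ifN_eq //; lia.
- apply: (eq_from_nth (x0:=0)).
  + rewrite size_act size_takel // size_drop size_act leq_subRL //.
  + rewrite size_takel; last by rewrite size_drop size_act leq_subRL.
    move=> i Hi; rewrite nth_take // nth_drop nth_act_tperm; last first.
      by apply: leq_trans HL; rewrite ltn_add2l.
    rewrite nth_act_tperm // Ha Hb !eqn_add2l.
    have HN : (N <= size (drop d t))%N by rewrite size_drop Ht leq_subRL.
    by case E1: (i == val a0); case E2: (i == val b0); rewrite /= ?nth_take ?ltn_ord // ?nth_drop.
Qed.

Lemma Pj_ltN j p : (1 <= j)%N -> (p <= j)%N -> ((Pj j p).-1 < Nj j)%N.
Proof.
move=> Hj Hp; rewrite Nj_Bk; have := Pj_lt Hj Hp; have := Pj_gt0 j p.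
case: (Pj j p) => // x _; case: (Bk j) => // y /=.
Qed.

Lemma act_invol L (W : seq nat) (a b : 'I_L) : size W = L ->
  act (act W (tperm a b)) (tperm a b) = W.
Proof. by move=> H; rewrite act_comp tperm2 act1. Qed.

Lemma act_fix L (W : seq nat) (a b : 'I_L) : size W = L ->
  nth 0 W a = nth 0 W b -> act W (tperm a b) = W.
Proof.
move=> Hs E; apply: (eq_from_nth (x0:=0)); rewrite size_act // => i Hi.
rewrite nth_act_tperm //; case: eqP => [->|_]; first by rewrite E.
by case: eqP => [->|_].
Qed.

Lemma Zj2_mk (K : fieldType) j p q (s1 : seq nat) (a0 b0 : 'I_(Nj j)) :
  (p < q <= j)%N -> val a0 = (Pj j p).-1 -> val b0 = (Pj j q).-1 ->
  size s1 = Nj j -> (nth 0 s1 b0 < nth 0 s1 a0)%N ->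
  Zj j (scaleA 1 (addA (mono K s1) (mono K (act s1 (tperm a0 b0))))).
Proof.
move=> Hpq Ha Hb Hs Hl; right.
have Hab : val a0 != val b0.
  rewrite Ha Hb; apply/eqP => E.
  have : Pj j p = Pj j q.
    by move: E (Pj_gt0 j p) (Pj_gt0 j q); case: (Pj j p) => // x; case: (Pj j q) => // y /= ->.
  move/Pj_inj => E'; move: Hpq; rewrite E' ltnn //.
have Hab' : a0 != b0 by apply: contra Hab => /eqP ->.
exists 1, s1, (act s1 (tperm a0 b0)); split => //; split => //; split; first by rewrite size_act.
exists p, q, (nth 0 s1 a0), (nth 0 s1 b0); split => //; split => //.
rewrite /pos -Ha -Hb !nth_act_tperm ?ltn_ord // eqxx [val b0 == val a0]eq_sym (negbTE Hab) eqxx.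
do 4 (split => //).
move=> r /andP [Hr1 HrN] Hrp Hrq.
have Hr : (r.-1 < Nj j)%N by lia.
rewrite nth_act_tperm // Ha Hb.
have Hr' : r.-1 <> (Pj j p).-1.
  move=> E; apply: Hrp; have := Pj_gt0 j p; lia.
have Hr'' : r.-1 <> (Pj j q).-1.
  move=> E; apply: Hrq; have := Pj_gt0 j q; lia.
by case: eqP => // _; case: eqP.
Qed.

Lemma Zj_inv (K : fieldType) j (z : elt K) : (1 <= j)%N -> Zj j z ->
  exists (a0 b0 : 'I_(Nj j)) p q, [/\ (p < q <= j)%N, val a0 = (Pj j p).-1,
    val b0 = (Pj j q).-1 & forall W, size W = Nj j -> z (act W (tperm a0 b0)) = z W].
Proof.
move=> Hj [[c [s [-> [Hs [p [q [Hpq E]]]]]]] |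
  [c [s1 [s2 [-> [H1 [H2 [p [q [l1 [l2 [Hpq [Hl [E1 [E2 [E3 [E4 Ho]]]]]]]]]]]]]]]]].
- have Hp : (p <= j)%N by case/andP: Hpq => Hp1 Hp2; exact: leq_trans (ltnW Hp1) Hp2.
  have Hq : (q <= j)%N by case/andP: Hpq.
  set a0 := Ordinal (Pj_ltN Hj Hp); set b0 := Ordinal (Pj_ltN Hj Hq).
  have Eab : nth 0 s a0 = nth 0 s b0 := E.
  have Fs := act_fix Hs Eab.
  exists a0, b0, p, q; split => //.
  move=> W HW; rewrite /scaleA /mono; congr (_ * _%:R).
  case: (W =P s) => [->|Hn]; first by rewrite Fs eqxx.
  case: eqP => // H; exfalso; apply: Hn.
  by rewrite -(act_invol a0 b0 HW) H Fs.
- have Hp : (p <= j)%N by case/andP: Hpq => Hp1 Hp2; exact: leq_trans (ltnW Hp1) Hp2.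
  have Hq : (q <= j)%N by case/andP: Hpq.
  set a0 := Ordinal (Pj_ltN Hj Hp); set b0 := Ordinal (Pj_ltN Hj Hq).
  have Hne : (Pj j p).-1 != (Pj j q).-1.
    apply/eqP => E; have : Pj j p = Pj j q.
      by move: E (Pj_gt0 j p) (Pj_gt0 j q); case: (Pj j p) => // x; case: (Pj j q) => // y /= ->.
    move/Pj_inj => E'; move: Hpq; rewrite E' ltnn //.
  have Es2 : s2 = act s1 (tperm a0 b0).
    apply: (eq_from_nth (x0:=0)); rewrite ?size_act // => i Hi.
    rewrite nth_act_tperm; last by rewrite -H2.
    case: eqP => [Ei|Ni]; first by rewrite Ei; rewrite /pos in E3 E2; rewrite E3 E2.
    case: eqP => [Ei|Ni']; first by rewrite Ei; rewrite /pos in E4 E1; rewrite E4 E1.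
    have := Ho i.+1; rewrite /pos /= => -> //.
    + by rewrite -H2.
    + move=> E; apply: Ni; by rewrite /= -E.
    + move=> E; apply: Ni'; by rewrite /= -E.
  exists a0, b0, p, q; split => //.
  move=> W HW; rewrite /scaleA /Defs.addA /mono; congr (_ * _).
  have -> : (act W (tperm a0 b0) == s1) = (W == s2).
    apply/idP/idP => /eqP H; apply/eqP.
    + by rewrite -(act_invol a0 b0 HW) H Es2.
    + by rewrite H Es2 act_invol.
  have -> : (act W (tperm a0 b0) == s2) = (W == s1).
    apply/idP/idP => /eqP H; apply/eqP.
    + by rewrite -(act_invol a0 b0 HW) H Es2 act_invol.
    + by rewrite H Es2.
  by rewrite addrC.
Qed.

Lemma core (K : fieldType) k l c j m p q (w : seq nat) (a b : 'I_l) :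
  (1 <= j <= k)%N -> l.+1 = (c * Bk k)%N -> size w = l -> (p < q <= j)%N ->
  val a = (m * Bk j + (Pj j p).-1)%N -> val b = (m * Bk j + (Pj j q).-1)%N ->
  (nth 0 w a = nth 0 w b -> Bj j (mono K w)) /\
  Bj j (addA (mono K w) (mono K (act w (tperm a b)))).
Proof.
move=> Hjk E Hw Hpq Ha Hb.
have Hj : (1 <= j)%N by case/andP: Hjk.
have Hp : (p <= j)%N by case/andP: Hpq => Hp1 Hp2; exact: leq_trans (ltnW Hp1) Hp2.
have Hq : (q <= j)%N by case/andP: Hpq.
have HdN : (m * Bk j + Nj j <= l)%N.
  apply: (block_fit Hjk E); have := ltn_ord a; rewrite Ha; lia.
set d := (m * Bk j)%N in Ha Hb HdN. set N := Nj j in HdN.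
set a0 : 'I_N := Ordinal (Pj_ltN Hj Hp); set b0 : 'I_N := Ordinal (Pj_ltN Hj Hq).
have Ha' : val a = (d + a0)%N by [].
have Hb' : val b = (d + b0)%N by [].
have Hne : a0 != b0.
  apply/eqP => E0; have : Pj j p = Pj j q.
    move: (f_equal val E0) (Pj_gt0 j p) (Pj_gt0 j q) => /=.
    by case: (Pj j p) => // x; case: (Pj j q) => // y /= ->.
  move/Pj_inj => E'; move: Hpq; rewrite E' ltnn //.
have [T1 T2 T3] := act_block HdN Hw Ha' Hb'.
have HdL : (d <= l)%N by apply: leq_trans HdN; apply: leq_addr.
set u := take d w; set win := take N (drop d w); set r := drop (d + N) w.
have Hu : size u = d by rewrite size_takel // Hw.
have Hwin : size win = N by rewrite size_takel // size_drop Hw leq_subRL.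
have Ew : w = u ++ win ++ r.
  by apply/eqP; rewrite (eq_cat3 _ _ Hu Hwin) !eqxx.
have Ew' : act w (tperm a b) = u ++ act win (tperm a0 b0) ++ r.
  by apply/eqP; rewrite (eq_cat3 _ _ Hu (size_act _ _)) T1 T2 T3 !eqxx.
have Na : nth 0 win a0 = nth 0 w a by rewrite nth_take ?ltn_ord // nth_drop Ha'.
have Nb : nth 0 win b0 = nth 0 w b by rewrite nth_take ?ltn_ord // nth_drop Hb'.
have Hu' : An (m * 100 ^ (j ^ 2)) (mono K u) by have := An_mono K u; rewrite Hu.
have G1 : nth 0 w a = nth 0 w b -> Bj j (mono K w).
  move=> Eab; apply: span_gen.
  exists m, (mono K u), (scaleA 1 (mono K win)), (mono K r); split => //.
  split; last split; [ | exact: A1_mono | by rewrite gen1 -Ew].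
  left; exists 1, win; split => //; split => //; exists p, q; split => //.
  rewrite /pos; change (nth 0 win a0 = nth 0 win b0); by rewrite Na Nb.
split => //.
case: (ltngtP (nth 0 w a) (nth 0 w b)) => Hlt.
- set s1 := act win (tperm a0 b0).
  have Hs1 : size s1 = Nj j by rewrite size_act.
  have Ns : (nth 0 s1 b0 < nth 0 s1 a0)%N.
    by rewrite !nth_act tpermL tpermR Na Nb.
  have Z := @Zj2_mk K j p q s1 a0 b0 Hpq (erefl _) (erefl _) Hs1 Ns.
  have -> : addA (mono K w) (mono K (act w (tperm a b))) =
      mulA (mulA (mono K u) (scaleA 1 (addA (mono K s1) (mono K (act s1 (tperm a0 b0))))))
        (mono K r).
    rewrite gen2 ?size_act // act_invol // -Ew -Ew'.
    by apply: fext => T; rewrite /Defs.addA addrC.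
  apply: span_gen; exists m, (mono K u), (scaleA 1 (addA (mono K s1) (mono K (act s1 (tperm a0 b0))))), (mono K r).
  by split => //; split => //; split => //; exact: A1_mono.
- have Ns : (nth 0 win b0 < nth 0 win a0)%N by rewrite Na Nb.
  have Z := @Zj2_mk K j p q win a0 b0 Hpq (erefl _) (erefl _) Hwin Ns.
  have -> : addA (mono K w) (mono K (act w (tperm a b))) =
      mulA (mulA (mono K u) (scaleA 1 (addA (mono K win) (mono K (act win (tperm a0 b0))))))
        (mono K r).
    by rewrite gen2 ?size_act // -Ew -Ew'.
  apply: span_gen; exists m, (mono K u), (scaleA 1 (addA (mono K win) (mono K (act win (tperm a0 b0))))), (mono K r).
  by split => //; split => //; split => //; exact: A1_mono.
- rewrite act_fix //; apply: span_add; exact: G1.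
Qed.

Lemma rels (K : fieldType) k l c (w : seq nat) (a b : 'I_l) :
  (1 <= k)%N -> l.+1 = (c * Bk k)%N -> size w = l -> a != b -> lab k a = lab k b ->
  (nth 0 w a = nth 0 w b -> Bsum k (mono K w)) /\
  Bsum k (addA (mono K w) (mono K (act w (tperm a b)))).
Proof.
move=> Hk E Hw Hab El.
have [j [m [p [q [Hjk Hpq Hne Ea Eb]]]]] := lab_inv El Hab.
case/andP: Hpq => Hp Hq.
case: (ltngtP p q) => Hlt.
- have [G1 G2] := core K (c:=c) (m:=m) (a:=a) (b:=b) Hjk E Hw (introT andP (conj Hlt Hq)) Ea Eb.
  split; [by move=> /G1; apply: Bsum_Bj | exact: Bsum_Bj G2].
- have [G1 G2] := core K (c:=c) (m:=m) (a:=b) (b:=a) Hjk E Hw (introT andP (conj Hlt Hp)) Eb Ea.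
  split; [by move=> H; apply: (Bsum_Bj Hjk); apply: G1 | rewrite tpermC; exact: Bsum_Bj G2].
- by move: Hne; rewrite Hlt eqxx.
Qed.

Lemma sgn_mul_tperm (K : fieldType) L (a b : 'I_L) (s : 'S_L) : a != b ->
  sgn K (s * tperm a b)%g = - sgn K s.
Proof.
move=> Hab; rewrite /sgn odd_permM odd_tperm Hab.
by case: (odd_perm s); rewrite /= ?expr1 ?expr0 ?opprK.
Qed.

Lemma perm_rel1 (K : fieldType) k l (w : seq nat) : size w = l ->
  Bsum k (fun T => mono K (act w (1%g : 'S_l)) T - sgn K (1%g : 'S_l) * mono K w T).
Proof.
move=> Hw; apply: (@Bsum_ext _ _ (zeroA K)); last exact: Bsum0.
by move=> T; rewrite act1 // /sgn odd_perm1 expr0 mul1r /zeroA subrr.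
Qed.

Lemma perm_rel (K : fieldType) k l c : (1 <= k)%N -> l.+1 = (c * Bk k)%N ->
  forall n (s : 'S_l), (#|[pred i | s i != i]| <= n)%N -> inH k s ->
  forall w, size w = l ->
  Bsum k (fun T => mono K (act w s) T - sgn K s * mono K w T).
Proof.
move=> Hk E; elim=> [|n IH] s Hc Hs w Hw.
- have -> : s = 1%g.
    apply/permP => i; rewrite perm1; apply/eqP; apply/negPn/negP => Hi.
    move: Hc; rewrite leqn0 => /eqP /card0_eq /(_ i); by rewrite inE Hi.
  exact: perm_rel1.
case: (pickP [pred i | s i != i]) => [i Hi | Hn]; last first.
  have -> : s = 1%g.
    by apply/permP => i; rewrite perm1; move: (Hn i) => /= /negbFE /eqP.
  exact: perm_rel1.
set t := tperm i (s i); set s' := (s * t)%g.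
have Hsi : lab k (s i) = lab k i by move/inHP: Hs.
have Hne : i != s i by rewrite eq_sym.
have Ht : inH k t by apply: inH_tperm.
have Hs' : inH k s' by apply: inH_mul.
have Hc' : (#|[pred x | s' x != x]| <= n)%N.
  have Hpr : [pred x | s' x != x] \proper [pred x | s x != x].
    apply/properP; split.
    + apply/subsetP => x; rewrite !inE; apply: contraNN => /eqP Hx.
      rewrite /s' permM Hx tpermD //.
      * apply/eqP => Eix; move: Hi; by rewrite /= Eix Hx eqxx.
      * apply/eqP => Ex; move: Hx; rewrite -Ex => /perm_inj Ex'.
        move: Hi; by rewrite /= Ex' eqxx.
    + exists i => //; by rewrite inE /s' permM tpermR eqxx.
  exact: leq_trans (proper_card Hpr) Hc.
have Es : s = (s' * t)%g by rewrite /s' -mulgA tperm2 mulg1.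
have IH' := IH s' Hc' Hs' (act w t) (size_act _ _).
have [_ R] := rels K (a:=i) (b:=s i) Hk E Hw Hne (esym Hsi).
have Hsg : sgn K s = - sgn K s' by rewrite Es sgn_mul_tperm.
have Ea : act w s = act (act w t) s' by rewrite act_comp -Es.
apply: (Bsum_ext _ (Bsum_add IH' (Bsum_scale (sgn K s') R))) => T.
rewrite /scaleA /Defs.addA Ea Hsg -/t.
ring.
Qed.

Definition phi (K : fieldType) k l (s : seq nat) (x : elt K) : K :=
  \sum_(σ : 'S_l | inH k σ) sgn K σ * x (act s σ).

Definition badw k l (v : seq nat) : bool :=
  [exists a : 'I_l, exists b : 'I_l,
     (a != b) && (lab k a == lab k b) && (nth 0 v a == nth 0 v b)].

Lemma badw_act k l (w : seq nat) (s : 'S_l) : badw k l w -> inH k s -> badw k l (act w s).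
Proof.
move=> /existsP [a /existsP [b /andP [/andP [Hab /eqP El] /eqP En]]] Hs.
have Hsi := inH_inv Hs; move/inHP: Hsi => Hsi.
apply/existsP; exists ((s^-1)%g a); apply/existsP; exists ((s^-1)%g b).
rewrite !nth_act !permKV Hsi Hsi El En !eqxx !andbT.
by rewrite (inj_eq (@perm_inj _ _)).
Qed.

Lemma act_inj k l (w : seq nat) (s t : 'S_l) : ~~ badw k l w -> inH k s -> inH k t ->
  act w s = act w t -> s = t.
Proof.
move=> Hg /inHP Hs /inHP Ht E; apply/permP => i.
have := congr1 (fun v => nth 0 v i) E; rewrite /= !nth_act => En.
apply/eqP; apply/negPn/negP => Hne; case/negP: Hg.
apply/existsP; exists (s i); apply/existsP; exists (t i).
by rewrite Hne Hs Ht En !eqxx.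
Qed.

Lemma bad_sum (K : fieldType) k l c (y : elt K) : (1 <= k)%N -> l.+1 = (c * Bk k)%N ->
  finsupp y -> (forall v, y v != 0 -> size v = l /\ badw k l v) -> Bsum k y.
Proof.
move=> Hk E [L HL] Hb.
set U := undup L.
apply: (Bsum_ext _ (@Bsum_sum K k _ U (fun _ => true)
   (fun v => scaleA (y v) (mono K v)) _)).
- move=> T; rewrite /scaleA /mono.
  case HT: (T \in U).
  + rewrite (bigD1_seq T) ?undup_uniq //= eqxx mulr1 big1 ?addr0 // => v Hv.
    by rewrite eq_sym (negbTE Hv) mulr0.
  + rewrite big_seq_cond big1 => [|v /andP [Hv _]].
    * case: (eqVneq (y T) 0) => // /HL; by rewrite -mem_undup -/U HT.
    * have -> : (T == v) = false by apply: contraFF HT => /eqP ->.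
      by rewrite mulr0.
- move=> v _; case: (eqVneq (y v) 0) => Hyv.
  + apply: (@Bsum_ext _ _ (zeroA K)); last exact: Bsum0.
    by move=> T; rewrite /scaleA Hyv mul0r.
  + apply: Bsum_scale; have [Hv /existsP [a /existsP [b /andP [/andP [Hab /eqP El] /eqP En]]]] := Hb v Hyv.
    have [R _] := rels K Hk E Hv Hab El; exact: R.
Qed.

Lemma complete (K : fieldType) k l c (x : elt K) : (1 <= k)%N -> l.+1 = (c * Bk k)%N ->
  An l x -> (forall s, size s = l -> phi k l s x = 0) -> Bsum k x.
Proof.
move=> Hk E [[L HL] Hsz].
elim: L x HL Hsz => [|w L' IH] x HL Hsz Hphi.
  apply: (@Bsum_ext _ _ (zeroA K)); last exact: Bsum0.
  by move=> T; case: (eqVneq (x T) 0) => // /HL.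
case: (eqVneq (x w) 0) => Hxw.
  apply: IH => // v Hv; have := HL v Hv; rewrite inE; case: eqP => // Ev _.
  by move: Hv; rewrite Ev Hxw eqxx.
have Hwl : size w = l := Hsz w Hxw.
pose O := fun v => [exists σ : 'S_l, inH k σ && (v == act w σ)].
have Ow : O w by apply/existsP; exists 1%g; rewrite inH1 act1 ?eqxx.
pose xO := fun v => if O v then x v else 0.
pose x' := fun v => if O v then 0 else x v.
have Hx : forall T, addA xO x' T = x T.
  by move=> T; rewrite /Defs.addA /xO /x'; case: (O T); rewrite ?addr0 ?add0r.
apply: (Bsum_ext Hx); apply: Bsum_add.
-
  case Hbw: (badw k l w).
  + apply: (bad_sum Hk E).
      exists (w :: L'); move=> v; rewrite /xO; case: (O v) => [H|]; [exact: HL H | by rewrite eqxx].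
    move=> v; rewrite /xO; case HO: (O v); last by rewrite eqxx.
    move=> Hv.
    move/existsP: HO => [σ /andP [Hσ /eqP ->]]; split; first exact: size_act.
    exact: badw_act.
  + have Hg : ~~ badw k l w by rewrite Hbw.
    have HxO : forall T, xO T = \sum_(σ : 'S_l | inH k σ) x (act w σ) * mono K (act w σ) T.
      move=> T; rewrite /xO /mono; case HO: (O T).
      * move/existsP: HO => [ρ /andP [Hρ /eqP ET]].
        rewrite (bigD1 ρ) //= -ET eqxx mulr1 big1 ?addr0 // => σ /andP [Hσ Hne].
        case: eqP => [Eq|]; last by rewrite mulr0.
        by case/eqP: Hne; apply: (act_inj Hg Hσ Hρ); rewrite -Eq ET.
      * rewrite big1 // => σ Hσ; case: eqP => [Eq|]; last by rewrite mulr0.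
        by move: HO; rewrite /O; case/existsP; exists σ; rewrite Hσ Eq eqxx.
    have HB : Bsum k (fun T => \sum_(σ : 'S_l | inH k σ)
        scaleA (x (act w σ)) (fun T => mono K (act w σ) T - sgn K σ * mono K w T) T).
      apply: Bsum_sum => σ Hσ; apply: Bsum_scale.
      exact: (@perm_rel K k l c Hk E _ σ (leqnn _) Hσ w Hwl).
    apply: (Bsum_ext _ HB) => T.
    rewrite HxO /scaleA.
    have H0 := Hphi w Hwl; rewrite /phi in H0.
    transitivity (\sum_(σ : 'S_l | inH k σ) x (act w σ) * mono K (act w σ) T -
                  (\sum_(σ : 'S_l | inH k σ) sgn K σ * x (act w σ)) * mono K w T).
      rewrite mulr_suml -sumrB; apply: eq_bigr => σ _; ring.
    by rewrite H0 mul0r subr0.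
-
  apply: IH.
  + move=> v; rewrite /x'; case HO: (O v); first by rewrite eqxx.
    move=> Hv; have := HL v Hv.
    rewrite inE; case: eqP => // Ev _; by move: HO; rewrite Ev Ow.
  + move=> v; rewrite /x'; case: (O v) => [|H]; [by rewrite eqxx | exact: Hsz H].
  + move=> s Hs; rewrite /phi; case HOs: (O s).
    * rewrite big1 // => σ Hσ; rewrite /x'.
      have -> : O (act s σ); last by rewrite mulr0.
      move/existsP: HOs => [ρ /andP [Hρ /eqP Es]].
      apply/existsP; exists (σ * ρ)%g; rewrite inH_mul // Es act_comp eqxx //.
    * transitivity (phi k l s x); last exact: Hphi s Hs.
      rewrite /phi; apply: eq_bigr => σ Hσ; rewrite /x'.
      case HO: (O (act s σ)) => //.
      move/existsP: HO => [ρ /andP [Hρ /eqP Es]].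
      move: HOs; rewrite /O; case/existsP; exists ((σ^-1) * ρ)%g.
      rewrite inH_mul ?inH_inv //= -act_comp -Es act_comp mulVg act1 //.
Qed.

Definition Lam (K : fieldType) k l (s : seq nat) (mu : nat) (y : elt K) : elt K :=
  fun v => \sum_(σ : 'S_l | inH k σ) sgn K σ * y (act s σ ++ mu :: v).

Lemma Lam_add (K : fieldType) k l s mu (f g : elt K) :
  Lam k l s mu (addA f g) = addA (Lam k l s mu f) (Lam k l s mu g).
Proof.
apply: fext => v; rewrite /Lam /Defs.addA -big_split /=; apply: eq_bigr => σ _.
by rewrite mulrDr.
Qed.

Lemma Lam_zero (K : fieldType) k l s mu : Lam k l s mu (zeroA K) = zeroA K.
Proof. by apply: fext => v; rewrite /Lam /zeroA big1 // => σ _; rewrite mulr0. Qed.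

Lemma Lam_scale (K : fieldType) k l s mu c (f : elt K) :
  Lam k l s mu (scaleA c f) = scaleA c (Lam k l s mu f).
Proof.
apply: fext => v; rewrite /Lam /scaleA mulr_sumr; apply: eq_bigr => σ _.
by rewrite mulrCA.
Qed.

Lemma drop_catl (T : Type) n (s1 s2 : seq T) : (n <= size s1)%N ->
  drop n (s1 ++ s2) = drop n s1 ++ s2.
Proof.
move=> H; rewrite drop_cat; case: ltnP => // H'.
have E : n = size s1 by apply/eqP; rewrite eqn_leq H H'.
by rewrite E subnn drop0 drop_size.
Qed.

Lemma Pjm1_neq j p q : (p < q)%N -> (Pj j p).-1 != (Pj j q).-1.
Proof.
move=> Hpq; apply/eqP => E0; have : Pj j p = Pj j q.
  by move: E0 (Pj_gt0 j p) (Pj_gt0 j q); case: (Pj j p) => // x; case: (Pj j q) => // y /= ->.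
by move/Pj_inj => E'; move: Hpq; rewrite E' ltnn.
Qed.

Lemma Lam_gen (K : fieldType) k l c s mu j (g : elt K) :
  (1 <= j <= k)%N -> l.+1 = (c * Bk k)%N -> size s = l -> Bgen j g -> Bj j (Lam k l s mu g).
Proof.
move=> Hjk E Hs [m [u [z [v [Hu [Hz [Hv ->]]]]]]].
have Hj : (1 <= j)%N by case/andP: Hjk.
have HzN := Zj_An Hz.
case: (dichot m Hjk E) => [HdN | [m' Ed]].
- have -> : Lam k l s mu (mulA (mulA u z) v) = zeroA K; last exact: span0.
  have [a0 [b0 [p [q [Hpq Ea0 Eb0 Hinv]]]]] := Zj_inv Hj Hz.
  case/andP: Hpq => Hpq Hqj.
  have Hpj : (p <= j)%N := leq_trans (ltnW Hpq) Hqj.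
  set d := (m * Bk j)%N in HdN.
  have Hu' : An d u := Hu.
  have Ha : (d + a0 < l)%N by apply: leq_trans HdN; rewrite ltn_add2l ltn_ord.
  have Hb : (d + b0 < l)%N by apply: leq_trans HdN; rewrite ltn_add2l ltn_ord.
  set a : 'I_l := Ordinal Ha; set b : 'I_l := Ordinal Hb.
  have Hab : a != b.
    apply/eqP => /(f_equal val) /= /eqP; rewrite eqn_add2l Ea0 Eb0.
    by apply/negP; apply: Pjm1_neq.
  have El : lab k a = lab k b by rewrite /= Ea0 Eb0 /d !lab_gen.
  apply: fext => y; rewrite /Lam /zeroA.
  apply: (@sum_vanish K k l s a b (fun t => mulA (mulA u z) v (t ++ mu :: y)) Hab El) => t Ht /=.
  have [T1 T2 T3] := act_block (a:=a) (b:=b) (a0:=a0) (b0:=b0) HdN Ht (erefl _) (erefl _).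
  have HdL : (d <= l)%N by apply: leq_trans HdN; apply: leq_addr.
  have HN : (Nj j <= size (drop d t))%N by rewrite size_drop Ht leq_subRL.
  have HN' : (Nj j <= size (drop d (act t (tperm a b))))%N by rewrite size_drop size_act leq_subRL.
  rewrite !(gen_val _ _ Hu' HzN) !size_cat size_act Ht.
  case: ifP => // _.
  rewrite !takel_cat ?size_act ?Ht // !drop_catl ?size_act ?Ht //.
  rewrite !takel_cat // T1 T2 T3 Hinv // size_takel //.
- set d' := (m' * Bk j)%N in Ed.
  pose u' : elt K := fun y => \sum_(σ : 'S_l | inH k σ) sgn K σ * u (act s σ ++ mu :: y).
  have Hu1 : An (l.+1 + d') u by rewrite -Ed.
  have [[Lu SLu] ZLu] := Hu1.
  have Hex y : u' y != 0 -> exists σ : 'S_l, u (act s σ ++ mu :: y) != 0.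
    move=> Hy.
    case: (pickP (fun σ : 'S_l => inH k σ && (u (act s σ ++ mu :: y) != 0))) => [σ /andP [Hσ Hu0] | Hn].
      by exists σ.
    case/negP: Hy; apply/eqP; rewrite /u' big1 // => σ Hσ.
    by move: (Hn σ); rewrite Hσ /= => /negbFE /eqP ->; rewrite mulr0.
  have Hu' : An d' u'.
    split.
    + exists [seq drop l.+1 w | w <- Lu] => y /Hex [σ Hu0].
      apply/mapP; exists (act s σ ++ mu :: y); first exact: SLu.
      by rewrite drop_cat size_act ltnNge leqnSn /= subSnn /= drop0.
    + move=> y /Hex [σ Hu0]; have := ZLu _ Hu0; rewrite size_cat size_act /=.
      rewrite -addSnnS => /eqP; rewrite eqn_add2l => /eqP //.
  have Edr X n (w : seq nat) : size X = l.+1 -> drop (l.+1 + n) (X ++ w) = drop n w.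
    by move=> HX; rewrite addnC -drop_drop drop_size_cat.
  have Etk X n (w : seq nat) : size X = l.+1 -> take (l.+1 + n) (X ++ w) = X ++ take n w.
    by move=> HX; rewrite takeD take_size_cat // drop_size_cat.
  have -> : Lam k l s mu (mulA (mulA u z) v) = mulA (mulA u' z) v.
    apply: fext => y; rewrite /Lam (gen_val _ _ Hu' HzN).
    have Ec : (l.+1 + d' + Nj j <= l + (size y).+1)%N = (d' + Nj j <= size y)%N.
      by rewrite addnS -addSn -addnA leq_add2l.
    under eq_bigr => σ _ do rewrite (gen_val _ _ Hu1 HzN) size_cat size_act /= Ec.
    case: ifP => _; last by rewrite big1 // => σ _; rewrite mulr0.
    rewrite /u' !mulr_suml; apply: eq_bigr => σ _.
    have HX : size (rcons (act s σ) mu) = l.+1 by rewrite size_rcons size_act.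
    rewrite -cat_rcons (Etk _ _ _ HX) -addnA (Edr _ _ _ HX) (Edr _ _ _ HX) cat_rcons.
    by rewrite !mulrA.
  apply: span_gen; exists m', u', z, v; split => //.
Qed.

Lemma Lam_B (K : fieldType) k l c s mu (y : elt K) : (1 <= k)%N -> l.+1 = (c * Bk k)%N ->
  size s = l -> Bsum k y -> Bsum k (Lam k l s mu y).
Proof.
move=> Hk E Hs [b [Hb ->]]; exists (fun j => Lam k l s mu (b j)); split.
- move=> j Hj; have := Hb j Hj; elim => [|g Hg|f g _ Hf _ Hg|c' f _ Hf].
  + rewrite Lam_zero; exact: span0.
  + exact: Lam_gen Hj E Hs Hg.
  + rewrite Lam_add; exact: span_add.
  + rewrite Lam_scale; exact: span_scale.
- exact: (big_morph (Lam k l s mu) (@Lam_add K k l s mu) (@Lam_zero K k l s mu)).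
Qed.

Lemma step (K : fieldType) k l c (a : elt K) mu (Q : elt K) :
  (1 <= k)%N -> l.+1 = (c * Bk k)%N -> An l a -> ~ Bsum k a ->
  Bsum k (mulA (mulA a (gen K mu)) Q) -> Bsum k Q.
Proof.
move=> Hk E Ha Hna HP.
have [s [Hs Hphi]] : exists s, size s = l /\ phi k l s a != 0.
  case: (classic (exists s, size s = l /\ phi k l s a != 0)) => // Hno.
  exfalso; apply: Hna; apply: (complete Hk E Ha) => s Hs.
  apply/eqP; apply/negPn/negP => H; apply: Hno; by exists s.
have HL := Lam_B mu Hk E Hs HP.
have HgA : An l.+1 (mulA a (gen K mu)).
  by have := An_mulA Ha (An_mono K [:: mu]); rewrite addn1.
have EL : Lam k l s mu (mulA (mulA a (gen K mu)) Q) = scaleA (phi k l s a) Q.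
  apply: fext => v; rewrite /Lam /scaleA /phi mulr_suml; apply: eq_bigr => σ _.
  have HX : size (rcons (act s σ) mu) = l.+1 by rewrite size_rcons size_act.
  rewrite (mulA_homl _ _ HgA) size_cat size_act /= addnS ltnS leq_addr.
  rewrite -cat_rcons take_size_cat // drop_size_cat //.
  rewrite (mulA_homl _ _ Ha) size_rcons size_act leqnSn -cats1 take_size_cat ?size_act //.
  rewrite drop_size_cat ?size_act // /gen /mono eqxx mulr1.
  by rewrite mulrA.
apply: (Bsum_ext _ (Bsum_scale (phi k l s a)^-1 HL)) => v.
by rewrite EL /scaleA mulrA mulVf // mul1r.
Qed.

Local Close Scope ring_scope.

Theorem mainTheorem5 (K : fieldType) (k n : nat) (a : 'I_n -> elt K) :
  (1 <= k)%N -> (1 <= n)%N ->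
  (forall i, exists p : nat, (0 < p)%N /\ An (100 ^ (k ^ 2) * p).-1 (a i)) ->
  (forall i, ~ Bsum k (a i)) ->
  forall m : 'I_n -> nat, ~ Bsum k (wordprod a m).
Proof.
move=> Hk Hn Ha Hna m.
rewrite /wordprod; elim: (enum 'I_n) => [|i l IH] /=.
- move/Bsum_nil; rewrite /oneA /mono eqxx => /eqP; by rewrite GRing.oner_eq0.
- move=> HP; apply: IH.
  have [p [Hp Hap]] := Ha i.
  apply: (step (l := (100 ^ (k ^ 2) * p).-1) (c := p) Hk _ Hap (Hna i) HP).
  by rewrite prednK ?muln_gt0 ?expn_gt0 // mulnC.
Qed.
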